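(* Let $A$ be a system of $n_A$ qubits and $B$ a system of $n_B$ qubits, let $\rho_{A_1B_1}$ be a state at time $t_1$, and let $\mathcal{P}$ be a CPTP map from $AB$ at time $t_1$ to $AB$ at time $t_2$. Let $R_{A_1B_1A_2B_2}$ be the two-time pseudo-density matrix of the full system $AB$ and $R_{A_1B_2}$ the pseudo-density matrix constructed from measurements on $A$ at $t_1$ and on $B$ at $t_2$ (both defined in the context). Then $R_{A_1B_2}=\mathrm{Tr}_{B_1A_2}R_{A_1B_1A_2B_2}$.
   Context: Pauli matrices $\sigma_0=\mathbb{1},\sigma_1,\sigma_2,\sigma_3$; multi-qubit Pauli matrices are tensor products of these. The coarse-grained measurement of a Pauli matrix $\Sigma$ on $AB$ is $\{(\mathbb{1}\pm\Sigma)/2\}$ with outcomes $\pm1$ and Lüders update $\rho\mapsto P_\pm\rho P_\pm$. For Paulis $\Sigma_1,\Sigma_2$ on $AB$, $\langle\Sigma_1,\Sigma_2\rangle$ is the expected product of outcomes in: prepare $\rho_{A_1B_1}$, coarse-grained measurement of $\Sigma_1$ at $t_1$, apply $\mathcal{P}$, coarse-grained measurement of $\Sigma_2$ at $t_2$. Then $R_{A_1B_1A_2B_2}=2^{-2(n_A+n_B)}\sum \langle\sigma_i^{A}\otimes\sigma_j^{B},\sigma_k^{A}\otimes\sigma_l^{B}\rangle\,\sigma_i^{A_1}\otimes\sigma_j^{B_1}\otimes\sigma_k^{A_2}\otimes\sigma_l^{B_2}$ (sum over all multi-qubit Paulis $\sigma_i,\sigma_k$ on $A$ and $\sigma_j,\sigma_l$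 on $B$), and $R_{A_1B_2}=2^{-(n_A+n_B)}\sum_{i,l}\langle\sigma_i^A\otimes\mathbb{1}_B,\mathbb{1}_A\otimes\sigma_l^B\rangle\,\sigma_i^{A_1}\otimes\sigma_l^{B_2}$. *)

(* Defs.v *)
From HB Require Import structures.
From mathcomp Require Import all_boot all_order all_algebra algC.
Set Implicit Arguments. Unset Strict Implicit. Unset Printing Implicit Defensive.
Import Order.TTheory GRing.Theory Num.Theory.
Local Open Scope ring_scope.

(* Operators on a finite-dimensional Hilbert space with orthonormal basis T,
   represented by their matrix entries  X x y = <x|X|y>. *)
Definition op (T : finType) := T -> T -> algC.

Definition opmul (T : finType) (X Y : op T) : op T :=
  fun x y => \sum_(z : T) X x z * Y z y.
Definition opadd (T : finType) (X Y : op T) : op T := fun x y => X x y + Y x y.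
Definition opscale (T : finType) (a : algC) (X : op T) : op T := fun x y => a * X x y.
Definition opid (T : finType) : op T := fun x y => (x == y)%:R.
Definition opadj (T : finType) (X : op T) : op T := fun x y => (X y x)^*.
Definition optr (T : finType) (X : op T) : algC := \sum_(x : T) X x x.
Definition opsum (I T : finType) (F : I -> op T) : op T :=
  fun x y => \sum_(i : I) F i x y.

Definition tens (T U : finType) (X : op T) (Y : op U) : op (T * U)%type :=
  fun p q => X p.1 q.1 * Y p.2 q.2.

Definition psd (T : finType) (X : op T) : Prop :=
  opadj X = X /\
  forall v : T -> algC, 0 <= \sum_(x : T) \sum_(y : T) (v x)^* * X x y * v y.
Definition is_state (T : finType) (rho : op T) : Prop :=
  psd rho /\ optr rho = 1.

Definition lin_map (T U : finType) (P : op T -> op U) : Prop :=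
  forall (a : algC) (X Y : op T), P (opadd (opscale a X) Y) = opadd (opscale a (P X)) (P Y).
Definition trace_preserving (T U : finType) (P : op T -> op U) : Prop :=
  forall X : op T, optr (P X) = optr X.
(* id_k ⊗ P acting on operators of 'I_k ⊗ T, blockwise *)
Definition ampl (k : nat) (T U : finType) (P : op T -> op U) (X : op ('I_k * T)%type)
  : op ('I_k * U)%type :=
  fun p q => P (fun x y => X (p.1, x) (q.1, y)) p.2 q.2.
Definition completely_positive (T U : finType) (P : op T -> op U) : Prop :=
  forall (k : nat) (X : op ('I_k * T)%type), psd X -> psd (ampl P X).
Definition CPTP (T U : finType) (P : op T -> op U) : Prop :=
  [/\ lin_map P, trace_preserving P & completely_positive P].

Definition qb (n : nat) := {ffun 'I_n -> bool}.

(* single-qubit Paulis sigma_0 = 1, sigma_1, sigma_2, sigma_3 ; false = |0>, true = |1> *)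
Definition pauli1 (i : 'I_4) : op bool :=
  fun x y =>
    match nat_of_ord i with
    | 0 => (x == y)%:R
    | 1 => (x != y)%:R
    | 2 => if x == y then 0 else (if x then 'i else - 'i)
    | _ => if x == y then (if x then -1 else 1) else 0
    end.

Definition pauli (n : nat) (s : {ffun 'I_n -> 'I_4}) : op (qb n) :=
  fun x y => \prod_(k < n) pauli1 (s k) (x k) (y k).

Definition AB (nA nB : nat) := (qb nA * qb nB)%type.

(* coarse-grained measurement of Sigma : projector onto outcome (-1)^(~~b) *)
Definition sgn (b : bool) : algC := if b then 1 else -1.
Definition cproj (T : finType) (Sigma : op T) (b : bool) : op T :=
  opscale (2^-1) (opadd (@opid T) (opscale (sgn b) Sigma)).

(* <Sigma1, Sigma2>: expected product of outcomes when measuring Sigma1 at t1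
   (Lüders update), applying P, then measuring Sigma2 at t2 *)
Definition corr (T : finType) (rho : op T) (P : op T -> op T) (S1 S2 : op T) : algC :=
  \sum_(b1 : bool) \sum_(b2 : bool)
    sgn b1 * sgn b2 *
    optr (opmul (opmul (cproj S2 b2)
                       (P (opmul (opmul (cproj S1 b1) rho) (cproj S1 b1))))
                (cproj S2 b2)).

(* two-time pseudo-density matrix of AB, ordering A1 B1 A2 B2 *)
Definition R_full (nA nB : nat) (rho : op (AB nA nB)) (P : op (AB nA nB) -> op (AB nA nB))
  : op (AB nA nB * AB nA nB)%type :=
  opscale ((2 ^+ (2 * (nA + nB)))^-1)
   (opsum (fun ijkl : (({ffun 'I_nA -> 'I_4} * {ffun 'I_nB -> 'I_4}) *
                      ({ffun 'I_nA -> 'I_4} * {ffun 'I_nB -> 'I_4}))%type =>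
      let: ((i, j), (k, l)) := ijkl in
      opscale (corr rho P (tens (pauli i) (pauli j)) (tens (pauli k) (pauli l)))
              (tens (tens (pauli i) (pauli j)) (tens (pauli k) (pauli l))))).

(* pseudo-density matrix from measurements on A at t1 and B at t2, ordering A1 B2 *)
Definition R_A1B2 (nA nB : nat) (rho : op (AB nA nB)) (P : op (AB nA nB) -> op (AB nA nB))
  : op (AB nA nB) :=
  opscale ((2 ^+ (nA + nB))^-1)
   (opsum (fun il : ({ffun 'I_nA -> 'I_4} * {ffun 'I_nB -> 'I_4})%type =>
      let: (i, l) := il in
      opscale (corr rho P (tens (pauli i) (@opid (qb nB))) (tens (@opid (qb nA)) (pauli l)))
              (tens (pauli i) (pauli l)))).

Definition ptr_B1A2 (nA nB : nat) (R : op (AB nA nB * AB nA nB)%type) : op (AB nA nB) :=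
  fun p q => \sum_(b1 : qb nB) \sum_(a2 : qb nA)
               R ((p.1, b1), (a2, p.2)) ((q.1, b1), (a2, q.2)).

(* Main.v *)
Require Import Defs.
From HB Require Import structures.
From mathcomp Require Import all_boot all_order all_algebra algC.
From Stdlib Require Import FunctionalExtensionality.
Set Implicit Arguments. Unset Strict Implicit. Unset Printing Implicit Defensive.
Import Order.TTheory GRing.Theory Num.Theory.
Local Open Scope ring_scope.

Lemma tr_pauli1 (c : 'I_4) : \sum_(b : bool) pauli1 c b b = (c == 0)%:R * 2.
Proof.
rewrite /pauli1 /= !big_bool /=.
case: c => [[|[|[|[|m]]]] hm] //=.
- by rewrite mul1r.
- by rewrite /= ?eqxx ?addr0 ?mul0r; simpl; rewrite ?addr0 ?mul0r.
- by rewrite /= ?eqxx ?addr0 ?mul0r; simpl; rewrite ?addr0 ?mul0r.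
- by rewrite /= ?eqxx mul0r addrC subrr.
Qed.

Lemma tr_pauli n (s : {ffun 'I_n -> 'I_4}) :
  \sum_(x : qb n) pauli s x x = (s == [ffun => 0])%:R * 2 ^+ n.
Proof.
rewrite /pauli.
have -> : \sum_(x : qb n) \prod_(k < n) pauli1 (s k) (x k) (x k)
   = \prod_(k < n) \sum_(b : bool) pauli1 (s k) b b.
  by rewrite bigA_distr_bigA.
under eq_bigr do rewrite tr_pauli1.
rewrite big_split /= prodr_const card_ord.
congr (_ * _).
case: eqP => [->|/eqP ne].
  by apply: big1 => i _; rewrite ffunE eqxx.
have [k hk] : exists k, s k != 0.
  apply/existsP; move: ne; apply: contraR; rewrite negb_exists => /forallP h.
  by apply/eqP/ffunP => k; rewrite ffunE; move: (h k); rewrite negbK => /eqP.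
by rewrite (bigD1 k) //= (negbTE hk) mul0r.
Qed.

Lemma pauli0 n : pauli ([ffun => 0] : {ffun 'I_n -> 'I_4}) = @opid (qb n).
Proof.
apply: functional_extensionality => x; apply: functional_extensionality => y.
rewrite /pauli /opid /pauli1.
under eq_bigr do rewrite ffunE /=.
case: eqP => [->|/eqP ne].
  by apply: big1 => i _; rewrite eqxx.
have [k hk] : exists k, x k != y k.
  apply/existsP; move: ne; apply: contraR; rewrite negb_exists => /forallP h.
  by apply/eqP/ffunP => k; move: (h k); rewrite negbK => /eqP.
by rewrite (bigD1 k) //= (negbTE hk) mul0r.
Qed.
From mathcomp Require Import ring.
Lemma sum_pair2 (I J : finType) (T U : Type) (G : I -> J -> T -> U -> algC) p q :
  \sum_(x : I * J) (let '(i, j) := x in G i j) p q = \sum_i \sum_j G i j p q.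
Proof. by rewrite pair_bigA; apply: eq_bigr; case. Qed.

Lemma sum_pair4 (I J K L : finType) (G : I -> J -> K -> L -> algC) :
  \sum_(x : (I * J) * (K * L)) (let '(i, j, (k, l)) := x in G i j k l)
  = \sum_i \sum_j \sum_k \sum_l G i j k l.
Proof.
rewrite (eq_bigr (fun i => \sum_j \sum_(kl : K * L) G i j kl.1 kl.2)); last first.
  by move=> i _; apply: eq_bigr => j _; rewrite pair_bigA.
rewrite pair_bigA pair_bigA; apply: eq_bigr; by case=> [[i j] [k l]].
Qed.

Lemma sum_delta (I : finType) (z : I) (F : I -> algC) c :
  \sum_i F i * ((i == z)%:R * c) = F z * c.
Proof.
rewrite (bigD1 z) //= eqxx mul1r big1 ?addr0 // => i /negbTE ->.
by rewrite mul0r mulr0.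
Qed.

Lemma sd2 (I K : finType) (z1 : I) (z2 : K) (G : I -> K -> algC) c1 c2 :
  \sum_j \sum_k G j k * ((j == z1)%:R * c1) * ((k == z2)%:R * c2) = G z1 z2 * c1 * c2.
Proof.
rewrite (bigD1 z1) //= [X in _ + X]big1 => [|j /negbTE hj]; last first.
  by apply: big1 => k _; rewrite hj !mul0r mulr0 mul0r.
rewrite addr0 (bigD1 z2) //= [X in _ + X]big1 => [|k /negbTE hk]; last first.
  by rewrite hk mul0r mulr0.
by rewrite !eqxx !mul1r addr0.
Qed.

Theorem mainTheorem5 (nA nB : nat) (rho : op (AB nA nB))
  (P : op (AB nA nB) -> op (AB nA nB)) :
  is_state rho -> CPTP P ->
  R_A1B2 rho P = ptr_B1A2 (R_full rho P).
Proof.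
move=> _ _.
apply: functional_extensionality => p; apply: functional_extensionality => q.
rewrite /R_A1B2 /ptr_B1A2 /R_full /opscale /opsum /tens /= sum_pair2.
under [RHS]eq_bigr do rewrite -mulr_sumr.
rewrite -mulr_sumr.
under [in RHS]eq_bigr do rewrite exchange_big /=.
rewrite [in RHS]exchange_big /=.
set c := corr rho P; clearbody c.

pose G := (fun x : (({ffun 'I_nA -> 'I_4} * {ffun 'I_nB -> 'I_4}) * ({ffun 'I_nA -> 'I_4} * {ffun 'I_nB -> 'I_4}))%type => let '(i, j, (k, l)) := x in
     c (fun p0 q0 => pauli i p0.1 q0.1 * pauli j p0.2 q0.2)
       (fun p0 q0 => pauli k p0.1 q0.1 * pauli l p0.2 q0.2) *
     (pauli i p.1 q.1 * pauli l p.2 q.2) *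
     ((j == [ffun => 0])%:R * 2 ^+ nB) * ((k == [ffun => 0])%:R * 2 ^+ nA)).
rewrite [X in _ = _ * X](eq_bigr G); last first.
  case=> [[i j] [k l]] _; rewrite /G /=.
  rewrite -!tr_pauli -mulrA mulr_suml mulr_sumr; apply: eq_bigr => b1 _.
  rewrite mulr_sumr mulr_sumr; apply: eq_bigr => a2 _.
  ring.
rewrite /G sum_pair4.
pose H := fun i l => c (fun p0 q0 : AB nA nB => pauli i p0.1 q0.1 * opid p0.2 q0.2)
   (fun p0 q0 : AB nA nB => opid p0.1 q0.1 * pauli l p0.2 q0.2) * (pauli i p.1 q.1 * pauli l p.2 q.2).
rewrite [X in _ = _ * X](eq_bigr (fun i => \sum_l H i l * 2 ^+ nB * 2 ^+ nA)); last first.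
  move=> i _.
  under eq_bigr => j _ do rewrite exchange_big.
  rewrite exchange_big; apply: eq_bigr => l _ /=.
  by rewrite sd2 !pauli0.
have -> : \sum_i \sum_l H i l * 2 ^+ nB * 2 ^+ nA
    = (\sum_i \sum_l H i l) * (2 ^+ nA * 2 ^+ nB).
  rewrite mulr_suml; apply: eq_bigr => i _; rewrite mulr_suml; apply: eq_bigr => l _.
  by rewrite mulrA mulrAC.
rewrite (mulrC (\sum_i _)) mulrA; congr (_ * _).
have h : (2:algC) ^+ (nA + nB) != 0 by rewrite expf_neq0 // pnatr_eq0.
rewrite -exprD mul2n -addnn [2 ^+ (_ + _ + _)]exprD invfM -mulrA mulVf ?mulr1 //.
Qed.
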